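(* Let $G$ be a finite additive group (not necessarily abelian) and let $\mathcal X$ be a Hadamard $(G,K,\lambda)$-PDF. Then $\{{}^2X \mid X\in\mathcal X\}$ is a $(G,2K,4\lambda)$ strong difference family.
   Context: Multisets: the multiset sum $X\uplus Y$ adds multiplicities; ${}^\mu X$ denotes the multiset sum of $\mu$ copies of $X$ (so ${}^2X$ is $X$ with every element taken twice). For a multiset $X=\{x_1,\dots,x_k\}$ on $G$, $\Delta X$ is the multiset of all $x_i-x_j$ over ordered pairs $(i,j)$ of distinct indices; for a collection $\mathcal X$, $\Delta\mathcal X=\biguplus_{X\in\mathcal X}\Delta X$. A $(G,K,\lambda)$-PDF is a collection of subsets of $G$ partitioning $G$, with multiset of block sizes $K$, such that $\Delta\mathcal X={}^\lambda(G\setminus\{0\})$; it is Hadamard if $|G|=2\lambda$. A $(G,K,\mu)$ strong difference family (SDF) is a collection $\mathcal Y$ of multisubsets of $G$ with multiset of sizes $K$ such that $\Delta\mathcal Y={}^\mu G$ (every element of $G$, including $0$, occurs exactly $\mu$ times). For a multiset $K$ of integers, $2K$ is the multiset $\{2k : k\in K\}$. *)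

(* Defs.v *)
(* A finite group G is the carrier of a finGroupType gT;
   the paper's additive notation x - y (= x + (-y)) is rendered x * y^-1,
   and 0 is 1. Multisets on G are sequences (seq gT), compared up to order
   via counts / perm_eq. *)
From HB Require Import structures.
From mathcomp Require Import all_boot all_fingroup.
Set Implicit Arguments. Unset Strict Implicit. Unset Printing Implicit Defensive.

Local Open Scope group_scope.

Section Defs.
Variable gT : finGroupType.

Definition DeltaSeq (s : seq gT) : seq gT :=
  [seq nth 1 s ij.1 * (nth 1 s ij.2)^-1
     | ij <- [seq (i, j) | i <- iota 0 (size s), j <- iota 0 (size s)]
     & ij.1 != ij.2].

Definition DeltaFam (F : seq (seq gT)) : seq gT := flatten (map DeltaSeq F).

Definition twice (s : seq gT) : seq gT := s ++ s.

Definition dbl (K : seq nat) : seq nat := map (muln 2) K.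

Definition is_PDF (F : seq {set gT}) (K : seq nat) (lambda : nat) : Prop :=
  (forall g : gT, count (fun X : {set gT} => g \in X) F = 1%N) /\
  perm_eq [seq #|X| | X : {set gT} <- F] K /\
  (forall g : gT,
     count_mem g (DeltaFam [seq enum X | X : {set gT} <- F]) = if g == 1 then 0%N else lambda).

Definition is_Hadamard_PDF (F : seq {set gT}) (K : seq nat) (lambda : nat) : Prop :=
  is_PDF F K lambda /\ #|gT| = (2 * lambda)%N.

Definition is_SDF (Y : seq (seq gT)) (K : seq nat) (mu : nat) : Prop :=
  perm_eq [seq size X | X <- Y] K /\
  (forall g : gT, count_mem g (DeltaFam Y) = mu).

End Defs.

(* Main.v *)
From HB Require Import structures.
From mathcomp Require Import all_boot all_fingroup.
Set Implicit Arguments. Unset Strict Implicit. Unset Printing Implicit Defensive.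
Require Import Defs.
From mathcomp Require Import zify.

Lemma count_pairs (T : Type) (P : pred T) (h : nat * nat -> T) (l m : seq nat) :
  count P [seq h ij | ij <- [seq (i, j) | i <- l, j <- m] & ij.1 != ij.2] =
  \sum_(i <- l) \sum_(j <- m) ((i != j) && P (h (i, j))).
Proof.
elim: l => [|i l IH]; first by rewrite big_nil.
rewrite allpairs_cons filter_cat map_cat count_cat IH big_cons; congr (_ + _).
elim: m {IH} => [|j m IHm]; first by rewrite big_nil.
rewrite big_cons /= -IHm.
by case: (i != j) => //=.
Qed.

Definition fD (gT : finGroupType) (g : gT) (s : seq gT) (i j : nat) : bool :=
  mulg (nth 1%g s i) (invg (nth 1%g s j)) == g.

Lemma countD (gT : finGroupType) (g : gT) (s : seq gT) :
  count_mem g (DeltaSeq s) = \sum_(i <- iota 0 (size s)) \sum_(j <- iota 0 (size s))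
     ((i != j) && fD g s i j).
Proof. by rewrite /DeltaSeq count_pairs. Qed.

Lemma fD_split (gT : finGroupType) (g : gT) (s : seq gT) i j :
  (fD g s i j : nat) = (i != j) && fD g s i j + (i == j) && (g == 1%g).
Proof.
case: eqP => [->|_] /=; last by rewrite addn0.
by rewrite /fD mulgV eq_sym.
Qed.

Lemma sum_diag (b : bool) i k : i < k ->
  \sum_(j <- iota 0 k) ((i == j) && b) = b.
Proof.
move=> hi.
rewrite (bigD1_seq i) ?iota_uniq ?mem_iota //= eqxx /= big1_seq ?addn0 //.
by move=> j /andP[hj _]; rewrite eq_sym (negbTE hj).
Qed.

Lemma countD2 (gT : finGroupType) (g : gT) (s : seq gT) :
  count_mem g (DeltaSeq (twice s)) = 4 * count_mem g (DeltaSeq s) + (g == 1%g) * (2 * size s).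
Proof.
rewrite !countD /twice size_cat.
set k := size s.
have E : forall i, nth 1%g (s ++ s) (k + i) = nth 1%g s i.
  by move=> i; rewrite nth_cat ltnNge leq_addr /= addKn.
have E2 : forall i, i < k -> nth 1%g (s ++ s) i = nth 1%g s i.
  by move=> i hi; rewrite nth_cat hi.
have Hi : iota 0 (k + k) = iota 0 k ++ map (addn k) (iota 0 k).
  by rewrite iotaD -iotaDl addn0 add0n.
have hin : forall i, i \in iota 0 k -> i < k by move=> i; rewrite mem_iota.
set A := \sum_(i <- iota 0 k) \sum_(j <- iota 0 k) ((i != j) && fD g s i j).
have B : \sum_(i <- iota 0 k) \sum_(j <- iota 0 k) (fD g s i j : nat) = A + (g == 1%g) * k.
  rewrite /A (eq_bigr (fun i => \sum_(j <- iota 0 k) ((i != j) && fD g s i j) + \sum_(j <- iota 0 k) ((i == j) && (g == 1%g)))); last first.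
    by move=> i _; rewrite -big_split; apply: eq_bigr => j _; rewrite fD_split.
  rewrite big_split /=; congr (_ + _).
  rewrite (eq_big_seq (fun _ => (g == 1%g) : nat)); last by move=> i /hin; apply: sum_diag.
  by rewrite big_const_seq count_predT size_iota iter_addn_0 mulnC.
have B' : \sum_(i <- iota 0 k) \sum_(j <- iota 0 k) (fD g s j i : nat) = A + (g == 1%g) * k.
  rewrite exchange_big; exact: B.
rewrite Hi big_cat big_map /=.
rewrite (eq_big_seq (fun i => \sum_(j <- iota 0 k) ((i != j) && fD g s i j) + \sum_(j <- iota 0 k) (fD g s i j : nat))); last first.
  move=> i /hin hi; rewrite big_cat big_map /=; congr (_ + _).
    apply: eq_big_seq => j /hin hj; congr (_ && _); by rewrite /fD !E2.
  apply: eq_bigr => j _; rewrite ltn_eqF /=; last by apply: (leq_trans hi); apply: leq_addr.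
  by rewrite /fD E E2.
rewrite (eq_bigr (fun i => \sum_(j <- iota 0 k) (fD g s i j : nat) + \sum_(j <- iota 0 k) ((i != j) && fD g s i j))); last first.
  move=> i _; rewrite big_cat big_map /=; congr (_ + _).
    apply: eq_big_seq => j /hin hj; rewrite gtn_eqF /=; last by apply: (leq_trans hj); apply: leq_addr.
    by rewrite /fD E E2.
  apply: eq_bigr => j _; by rewrite eqn_add2l /fD !E.
rewrite !big_split /= -/A.
have B2 : \sum_(i <- iota 0 k) \sum_(j <- iota 0 k) (fD g s i j : nat) = A + (g == 1%g) * k := B.
rewrite B.
move: (nat_of_bool (g == 1%g)) => c; lia.
Qed.

Lemma sum_card (gT : finGroupType) (F : seq {set gT}) :
  (forall g : gT, count (fun X : {set gT} => g \in X) F = 1%N) ->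
  \sum_(X <- F) #|X| = #|gT|.
Proof.
move=> H.
rewrite (eq_bigr (fun X : {set gT} => \sum_(x : gT) (x \in X : nat))); last first.
  by move=> X _; rewrite -sum1_card big_mkcond.
rewrite exchange_big /= -sum1_card; apply: eq_bigr => x _.
rewrite -(H x) -sum1_count [RHS]big_mkcond; apply: eq_bigr => X _; by case: (x \in X).
Qed.

Theorem proposition2p2 (gT : finGroupType) (F : seq {set gT}) (K : seq nat) (lambda : nat) :
  is_Hadamard_PDF F K lambda ->
  is_SDF [seq twice (enum X) | X : {set gT} <- F] (dbl K) (4 * lambda).
Proof.
move=> [[Hpart [HK HD]] Hcard]; split.
  rewrite -map_comp /dbl.
  rewrite (eq_map (g := muln 2 \o (fun X : {set gT} => #|X|))); last first.
    by move=> X /=; rewrite /twice size_cat -cardE mul2n addnn.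
  by rewrite map_comp perm_map.
move=> g.
have Hg := HD g.
rewrite /DeltaFam count_flatten -!map_comp sumnE big_map in Hg.
rewrite /DeltaFam count_flatten -!map_comp sumnE big_map.
under eq_bigr => X _ do rewrite /= countD2 -cardE.
rewrite big_split /= -big_distrr /= -big_distrr /= -big_distrr /= sum_card // Hcard Hg.
case: eqP => _ /=; lia.
Qed.
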